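(* Let $H$ and $G$ be graphs with $G\in\operatorname{obs}^\ast(H)$. Then, up to isomorphism, \[\operatorname{obs}(G)=(\operatorname{obs}(H)\setminus\{G\})\cup\operatorname{obs}^\ast(G).\]
   Context: All graphs are finite, simple and loopless. A full-homomorphism $\varphi\colon G\to H$ is a map $V(G)\to V(H)$ such that for all $x,y\in V(G)$, $xy\in E(G)$ if and only if $\varphi(x)\varphi(y)\in E(H)$. A full $H$-colouring of $G$ is a full-homomorphism $G\to H$. A minimal $H$-obstruction is a graph $G$ that admits no full $H$-colouring while every proper induced subgraph of $G$ admits one; $\operatorname{obs}(H)$ denotes the set of minimal $H$-obstructions (up to isomorphism), and $\operatorname{obs}^\ast(H)$ the set of minimal $H$-obstructions on exactly $|V(H)|+1$ vertices. *)

(* Defs.v *)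
From mathcomp Require Import all_boot.
Set Implicit Arguments. Unset Strict Implicit. Unset Printing Implicit Defensive.

Record sgraph := SGraph {
  vert :> finType;
  adj : rel vert;
  adj_sym : symmetric adj;
  adj_irr : irreflexive adj }.

Definition full_hom (G H : sgraph) (f : G -> H) : Prop :=
  forall x y : G, adj x y = adj (f x) (f y).

Definition full_colourable (G H : sgraph) : Prop :=
  exists f : G -> H, full_hom f.

Definition induced_full_colourable (G : sgraph) (S : {set G}) (H : sgraph) : Prop :=
  exists f : {x : G | x \in S} -> H,
    forall x y : {x : G | x \in S}, adj (val x) (val y) = adj (f x) (f y).

Definition min_obs (H G : sgraph) : Prop :=
  ~ full_colourable G H /\
  forall S : {set G}, S != setT -> induced_full_colourable S H.

Definition min_obs_star (H G : sgraph) : Prop :=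
  min_obs H G /\ #|G| = #|H|.+1.

Definition graph_iso (G1 G2 : sgraph) : Prop :=
  exists f : G1 -> G2, bijective f /\ full_hom f.

(* Main.v *)
From Stdlib Require Import Classical.
Require Import Defs.
From mathcomp Require Import all_boot.
Set Implicit Arguments. Unset Strict Implicit. Unset Printing Implicit Defensive.

Definition pd (G : sgraph) := forall x y : G, (forall z, adj x z = adj y z) -> x = y.
Definition pdw (G : sgraph) (v : G) := forall x y : G, x != v -> y != v ->
  (forall z, z != v -> adj x z = adj y z) -> x = y.

Lemma setC1_neqT (G : finType) (x : G) : [set~ x] != setT.
Proof. apply/negP => /eqP e. have : x \in [set~ x] by rewrite e inE. by rewrite !inE eqxx. Qed.

Lemma min_obs_pd (H X : sgraph) : min_obs H X -> pd X.
Proof.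
move=> [nX hX] x y hxy; case: (eqVneq x y) => // nxy; exfalso.
have [g hg] := hX _ (setC1_neqT x).
have hr : forall z, (if z == x then y else z) \in [set~ x].
  by move=> z; case: eqP => [_|/eqP]; rewrite !inE // eq_sym.
apply: nX; exists (fun z => g (exist (fun u => u \in [set~ x]) _ (hr z))) => a b.
rewrite -hg /=.
case: (eqVneq a x) => [->|ax]; case: (eqVneq b x) => [->|bx];
  rewrite ?eqxx ?(negbTE ax) ?(negbTE bx) //.
- by rewrite !adj_irr.
- by rewrite adj_sym hxy adj_sym.
Qed.

Definition T3 (G : sgraph) (v x y : G) :=
  [/\ x != y, adj v x, ~~ adj v y & forall z, z != v -> adj x z = adj y z].

Lemma lemY (G : sgraph) (v x y a d : G) : T3 v x y -> T3 y a d -> d = v.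
Proof.
move=> [xy vx vy hv] [ad ya yd hy].
have av : a != v by apply/eqP => e; move: ya; rewrite e adj_sym (negbTE vy).
have xa : adj x a by rewrite hv // adj_sym.
have dx : adj d x by rewrite -hy // adj_sym.
case: (eqVneq d v) => // dv; exfalso.
by move: (hv d dv); rewrite (adj_sym x d) dx (negbTE yd).
Qed.

Lemma lemX (G : sgraph) (v x y a b : G) : T3 v x y -> T3 x a b -> a = v.
Proof.
move=> [xy vx vy hv] [ab xa xb hx].
case: (eqVneq a v) => // av; exfalso.
have ya : adj y a by rewrite -hv.
have yx : y != x by rewrite eq_sym.
have by_ : adj b y by rewrite -hx // adj_sym.
case: (eqVneq b v) => [e|bv].
  by move: by_; rewrite e (negbTE vy).
by move: (hv b bv); rewrite (negbTE xb) (adj_sym y b) by_.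
Qed.

Definition Nb (G : sgraph) (u : G) := [set z | adj u z].

Lemma lemN (G : sgraph) (b c x : G) : T3 b c x -> #|Nb x| < #|Nb c|.
Proof.
move=> [cx bc bx hb]; apply: proper_card; apply/properP; split.
  apply/subsetP => z; rewrite /Nb !inE => xz.
  have zb : z != b by apply/eqP => e; move: xz; rewrite e adj_sym (negbTE bx).
  by rewrite hb.
exists b; rewrite /Nb !inE; first by rewrite adj_sym.
by rewrite adj_sym.
Qed.

Lemma badT (G : sgraph) (v : G) : pd G -> ~ pdw v -> exists x y, T3 v x y.
Proof.
move=> hpd nb.
have [x [y [xv yv hz xy]]] : exists x y, [/\ x != v, y != v,
   (forall z, z != v -> adj x z = adj y z) & x <> y].
  apply: NNPP => ne; apply: nb => x y xv yv hz; apply: NNPP => xy.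
  by apply: ne; exists x, y.
have hxv : adj x v != adj y v.
  apply/negP => /eqP e; apply: xy; apply: hpd => z.
  by case: (eqVneq z v) => [->|zv] //; apply: hz.
case vx : (adj v x).
  exists x, y; split => //; first by apply/eqP.
  by move: hxv; rewrite !(adj_sym _ v) vx; case: (adj v y).
exists y, x; split => //.
- by apply/eqP => e; apply: xy.
- by move: hxv; rewrite !(adj_sym _ v) vx; case: (adj v y).
- by rewrite vx.
- by move=> z zv; rewrite hz.
Qed.

Lemma sumner (G : sgraph) (v0 : G) : pd G -> exists v : G, pdw v.
Proof.
move=> hpd; apply: NNPP => nall.
have bad : forall v : G, ~ pdw v by move=> v hv; apply: nall; exists v.
have grow : forall k : nat, exists v x y : G, T3 v x y /\ k <= #|Nb x|.
  elim => [|k [v [x [y [t hk]]]]].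
    have [x [y t]] := badT hpd (bad v0); by exists v0, x, y.
  have [a [b t2]] := badT hpd (bad x).
  have e := lemX t t2; subst a.
  have [c [d t3]] := badT hpd (bad b).
  have e := lemY t2 t3; subst d.
  exists b, c, x; split => //.
  exact: leq_ltn_trans hk (lemN t3).
have [v [x [y [_ hk]]]] := grow #|G|.+1.
by move: (leq_trans hk (max_card (mem (Nb x)))); rewrite ltnn.
Qed.

Definition induced (G : sgraph) (S : {set G}) : sgraph :=
  @SGraph {x : G | x \in S} (fun a b => adj (val a) (val b))
    (fun a b => adj_sym (val a) (val b)) (fun a => adj_irr (val a)).

Lemma card_ind (G : sgraph) (S : {set G}) : #|induced S| = #|S|.
Proof. by rewrite card_sig; apply: eq_card => x; rewrite !inE. Qed.

Lemma colT (X Y Z : sgraph) : full_colourable X Y -> full_colourable Y Z -> full_colourable X Z.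
Proof. by move=> [f hf] [g hg]; exists (g \o f) => a b /=; rewrite hf hg. Qed.

Lemma avoid (H G X : sgraph) (f : X -> G) : min_obs H G -> full_hom f ->
  ~ full_colourable X H -> forall u, exists x, f x = u.
Proof.
move=> [_ hG] hf nX u; apply: NNPP => nu.
have [g hg] := hG _ (setC1_neqT u).
have hin : forall x, f x \in [set~ u].
  by move=> x; rewrite !inE; apply/eqP => e; apply: nu; exists x.
apply: nX; exists (fun x => g (exist (fun w => w \in [set~ u]) (f x) (hin x))) => a b.
by rewrite -hg /= hf.
Qed.

Lemma section (X G : sgraph) (f : X -> G) : full_hom f -> (forall u, exists x, f x = u) ->
  exists s : G -> X, full_hom s /\ cancel s f.
Proof.
move=> hf hs.
have hs' : forall u, exists x, f x == u by move=> u; have [x e] := hs u; exists x; apply/eqP.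
have c : cancel (fun u => xchoose (hs' u)) f by move=> u; apply/eqP; exact: xchooseP (hs' u).
exists (fun u => xchoose (hs' u)); split => // a b.
by rewrite hf !c.
Qed.

Lemma pdw_inj (G H : sgraph) (v : G) (g : induced [set~ v] -> H) :
  pdw v -> full_hom g -> injective g.
Proof.
move=> hp hg a b e; apply: val_inj; apply: hp.
- by have := valP a; rewrite !inE.
- by have := valP b; rewrite !inE.
move=> z zv.
have zin : z \in [set~ v] by rewrite !inE.
change (adj a (exist (fun w => w \in [set~ v]) z zin : induced [set~ v]) =
        adj b (exist (fun w => w \in [set~ v]) z zin : induced [set~ v])).
by rewrite !hg e.
Qed.

Lemma H_le_G (H G : sgraph) : min_obs_star H G -> full_colourable H G.
Proof.
move=> [hG cG]; have hpd := min_obs_pd hG.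
have : 0 < #|G| by rewrite cG.
case/card_gt0P => v0 _.
have [v hv] := sumner v0 hpd.
have [g hg] := hG.2 _ (setC1_neqT v).
have ig : injective (g : induced [set~ v] -> H) := pdw_inj hv hg.
have cE : #|H| <= #|induced [set~ v]| by rewrite card_ind cardsC1 cG.
have [h gh hg'] := inj_card_bij ig cE.
exists (fun p => val (h p)) => p q.
by rewrite -{1}(hg' p) -{1}(hg' q) -hg.
Qed.

Theorem theorem3p5 (H G : sgraph) :
  min_obs_star H G ->
  forall F : sgraph,
    min_obs G F <->
    ((min_obs H F /\ ~ graph_iso F G) \/ min_obs_star G F).
Proof.
move=> hHG F; have [hG cG] := hHG; have HG := H_le_G hHG.
split.
- move=> hF; have [nF sF] := hF.
  case: (classic (forall S : {set F}, S != setT -> induced_full_colourable S H))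
    => [allH | nallH].
  + left; split.
    * split => // fH; apply: nF; exact: colT fH HG.
    * by move=> [f [_ hf]]; apply: nF; exists f.
  + right; split => //.
    have [S [nS nSH]] : exists S : {set F}, S != setT /\ ~ induced_full_colourable S H.
      apply: NNPP => ne; apply: nallH => S nS; apply: NNPP => nc; apply: ne; by exists S.
    have [g hg] := sF S nS.
    have surj := avoid (f := (g : induced S -> G)) hG hg nSH.
    have [s [hs cs]] := @section (induced S) G g hg surj.
    have low : #|G| <= #|S| by rewrite -(card_ind S); exact: leq_card (can_inj cs).
    have lt : #|S| < #|F| by rewrite -cardsT; apply: proper_card; rewrite properT.
    have : 0 < #|F| by apply: leq_ltn_trans lt.
    case/card_gt0P => v0 _.
    have [v hv] := sumner v0 (min_obs_pd hF).
    have [g2 hg2] := sF _ (setC1_neqT v).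
    have up := leq_card _ (pdw_inj (g := (g2 : induced [set~ v] -> G)) hv hg2).
    rewrite card_ind cardsC1 in up.
    apply/eqP; rewrite eqn_leq; apply/andP; split.
      by move: up; case: #|F| => //= n.
    exact: leq_ltn_trans low lt.
- case => [[hF niso] | [hF _]] //.
  split.
  + move=> [f hf].
    have surj := avoid hG hf hF.1.
    have [s [hs cs]] := section hf surj.
    case: (eqVneq [set s u | u in G] setT) => [eT | nT].
    * apply: niso; exists f; split => //; exists s => // x.
      have : x \in [set s u | u in G] by rewrite eT inE.
      by case/imsetP => u _ ->; rewrite cs.
    * have [g hg] := hF.2 _ nT; apply: hG.1.
      have hin : forall u, s u \in [set s u | u in G] by move=> u; rewrite imset_f.
      exists (fun u => g (exist (fun w => w \in [set s u | u in G]) (s u) (hin u))) => a b.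
      by rewrite -hg /= -hs.
  + move=> S nS; have [g hg] := hF.2 S nS; have [h hh] := HG.
    by exists (h \o g) => a b /=; rewrite -hh -hg.
Qed.
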